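(* Let $\Sigma$ be a finite simplicial complex, let $d\ge0$, and assume $\deg\tau>0$ for all $\tau\in\Sigma_d$. Then $d+2$ is an eigenvalue of the normalized up-Laplacian $\Delta^{up}_d$ if and only if the signed graph $(\Gamma_d,\tilde s)$ has an antibalanced connected component. Moreover, the multiplicity of the eigenvalue $d+2$ equals the number of antibalanced connected components of $(\Gamma_d,\tilde s)$.
   Context: $\Sigma_d$ consists of the $d$-simplices of $\Sigma$ with fixed orientations. $\mathrm{sgn}([\tau],\partial[\sigma])\in\{\pm1\}$ is the coefficient of $[\tau]$ in the simplicial boundary $\partial[\sigma]$ of the oriented $(d+1)$-simplex $\sigma\supset\tau$. $\deg\tau$ is the number of $(d+1)$-simplices containing $\tau$. $\Delta^{up}_d=D^{-1}B_{d+1}B_{d+1}^\top$, where $B_{d+1}$ is the signed $\Sigma_d\times\Sigma_{d+1}$ incidence matrix and $D=\mathrm{diag}(\deg\tau)$; all its eigenvalues lie in $[0,d+2]$. $\Gamma_d$ is the graph on $\Sigma_d$ in which distinct $\tau,\tau'$ are adjacent iff both are facets of some (necessarily unique) $\sigma\in\Sigma_{d+1}$. The sign is $\tilde s(\tau,\tau')=-\mathrm{sgn}([\tau],\partial[\sigma])\,\mathrm{sgn}([\tau'],\partial[\sigma])$. Switching at a vertex means multiplying the signs of all edges at that vertex by $-1$. A signed graph (or a connected component of one) is balanced if after some switchings all edge signs are $+1$, and antibalanced if after some switchings all edge signs are $-1$. *)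

(* Defs.v *)
From HB Require Import structures.
From mathcomp Require Import all_boot all_order all_algebra.
Unset Implicit Arguments. Unset Strict Implicit. Unset Printing Implicit Defensive.
Import Order.TTheory GRing.Theory Num.Theory.
Local Open Scope ring_scope.

Definition simplicial_complex (n : nat) (K : {set {set 'I_n}}) : Prop :=
  set0 \notin K /\
  (forall s t : {set 'I_n}, s \in K -> t \subset s -> t != set0 -> t \in K).

Definition Sd (n : nat) (K : {set {set 'I_n}}) (d : nat) : {set {set 'I_n}} :=
  [set s in K | #|s| == d.+1]%N.

Definition simp (n : nat) (K : {set {set 'I_n}}) (d : nat) :=
  {s : {set 'I_n} | s \in Sd n K d}.
HB.instance Definition _ (n : nat) (K : {set {set 'I_n}}) (d : nat) :=
  Finite.on (simp n K d).

Definition deg (n : nat) (K : {set {set 'I_n}}) (d : nat) (t : {set 'I_n}) : nat :=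
  #|[set s in Sd n K d.+1 | t \subset s]|.

(* Orientations: each simplex s carries the orientation given by the increasing
   order of its vertices, reversed iff eps s = true (arbitrary fixed choice).
   For tau a facet of sigma with sigma \ tau = {v}, the coefficient of [tau]
   in the boundary of [sigma] is
     (-1)^(eps tau + eps sigma + #{u in sigma | u < v}).
   The sum below has exactly one term (the removed vertex v). *)
Definition sgn (n : nat) (eps : {set 'I_n} -> bool) (t s : {set 'I_n}) : int :=
  (-1) ^+ (eps t + eps s
            + \sum_(v in s :\: t) #|[set u in s | (u < v)%N]|)%N.

Definition incid (R : nzRingType) (n : nat) (K : {set {set 'I_n}})
    (eps : {set 'I_n} -> bool) (d : nat) : 'M[R]_(#|{: simp n K d}|, #|{: simp n K d.+1}|) :=
  \matrix_(i, j)
    (let t := val (enum_val i : simp n K d) in let s := val (enum_val j : simp n K d.+1) in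
     if t \subset s then (sgn n eps t s)%:~R else 0).

Definition degmx (R : nzRingType) (n : nat) (K : {set {set 'I_n}}) (d : nat)
  : 'M[R]_(#|{: simp n K d}|) :=
  diag_mx (\row_i (deg n K d (val (enum_val i : simp n K d)))%:R).

Definition upLap (R : fieldType) (n : nat) (K : {set {set 'I_n}})
    (eps : {set 'I_n} -> bool) (d : nat) : 'M[R]_(#|{: simp n K d}|) :=
  invmx (degmx R n K d) *m incid R n K eps d *m (incid R n K eps d)^T.

Definition adjG (n : nat) (K : {set {set 'I_n}}) (d : nat) : rel (simp n K d) :=
  fun x y => (x != y) &&
    [exists s : simp n K d.+1, (val x \subset val s) && (val y \subset val s)].

(* The sign tilde s(tau,tau') = - sgn(tau, sigma) sgn(tau', sigma), where sigma is the
   unique (d+1)-simplex containing both, i.e. sigma = tau :|: tau'. *)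
Definition sgnG (n : nat) (K : {set {set 'I_n}}) (eps : {set 'I_n} -> bool)
    (d : nat) (x y : simp n K d) : int :=
  - (sgn n eps (val x) (val x :|: val y) * sgn n eps (val y) (val x :|: val y)).

Definition components (n : nat) (K : {set {set 'I_n}}) (d : nat)
  : {set {set simp n K d}} :=
  [set [set y | connect (adjG n K d) x y] | x : simp n K d].

(* A component C is antibalanced if after switching at some set of vertices
   (f x = true means "switch at x") every edge inside C has sign -1.
   Stated as a boolean (finite quantification over switching functions). *)
Definition antibalanced (n : nat) (K : {set {set 'I_n}}) (eps : {set 'I_n} -> bool)
    (d : nat) (C : {set simp n K d}) : bool :=
  [exists f : {ffun simp n K d -> bool},
    [forall x, forall y, ((x \in C) && (y \in C) && adjG n K d x y) ==>
      ((-1) ^+ f x * sgnG n K eps d x y * (-1) ^+ f y == -1)]].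

Definition n_antibalanced (n : nat) (K : {set {set 'I_n}}) (eps : {set 'I_n} -> bool)
    (d : nat) : nat :=
  #|[set C in components n K d | antibalanced n K eps d C]|.

(* Main.v *)
Require Import Defs.
From HB Require Import structures.
From mathcomp Require Import all_boot all_order all_algebra.
From mathcomp Require Import ring lra.
Import Order.TTheory GRing.Theory Num.Theory.
Local Open Scope ring_scope.

Section Core.
Set Implicit Arguments. Unset Strict Implicit.
Variable F : fieldType.

Lemma char_poly_conj n (P M : 'M[F]_n) : P \in unitmx ->
  char_poly (P *m M *m invmx P) = char_poly M.
Proof.
move=> Pu; rewrite /char_poly /char_poly_mx.
have e1 : map_mx polyC P *m map_mx polyC (invmx P) = 1%:M.
  by rewrite -map_mxM mulmxV // map_mx1.
have -> : 'X%:M - map_mx polyC (P *m M *m invmx P) =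
   map_mx polyC P *m ('X%:M - map_mx polyC M) *m map_mx polyC (invmx P).
  rewrite !map_mxM mulmxBr mulmxBl mul_mx_scalar -scalemxAl e1.
  by rewrite scalemx1.
rewrite !det_mulmx mulrC mulrA -det_mulmx.
by rewrite -map_mxM mulVmx // map_mx1 det1 mul1r.
Qed.


Lemma mup_core r m (M : 'M[F]_(r + m)) (U : 'M_(r, r + m)) a :
  row_free U -> (U :=: eigenspace M a)%MS ->
  (forall v : 'rV_(r + m), v *m (M - a%:M) *m (M - a%:M) = 0 -> v *m (M - a%:M) = 0) ->
  mup a (char_poly M) = r.
Proof.
move=> Uf UE gen.
set P := row_ebase U.
have Pu : P \in unitmx by apply: row_ebase_unit.
have rU : \rank U = r by apply/eqP.
have UP : U = col_ebase U *m usubmx P.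
  rewrite -{1}(mulmx_ebase U) rU pid_mx_row -/P -{1}(vsubmxK P).
  by rewrite -mulmxA mul_row_col mul1mx mul0mx addr0.
have sUP : (usubmx P :=: U)%MS.
  have cf : row_full (col_ebase U).
    rewrite row_full_unit; exact: col_ebase_unit.
  rewrite {1}UP. apply: eqmx_sym. exact: (eqmxMfull _ cf).
have top : usubmx P *m M = a *: usubmx P.
  by apply/eigenspaceP; rewrite sUP UE.
set Q := P *m M *m invmx P.
have uQ : usubmx Q = row_mx (a%:M) 0.
  rewrite /Q -!mul_usub_mx top -scalemxAl mul_usub_mx mulmxV //.
  rewrite (scalar_mx_block r m 1) /block_mx col_mxKu scale_row_mx scaler0.
  by rewrite scalemx1.
have Qb : Q = block_mx a%:M 0 (dlsubmx Q) (drsubmx Q).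
  by rewrite -{1}[Q]submxK /ulsubmx /ursubmx uQ row_mxKl row_mxKr.
set Y := drsubmx Q.
have cM : char_poly M = ('X - a%:P) ^+ r * char_poly Y.
  rewrite -(char_poly_conj M Pu) -/Q Qb /char_poly /char_poly_mx map_block_mx /=.
  rewrite map_mx0 (scalar_mx_block r m 'X) opp_block_mx add_block_mx oppr0 addr0.
  rewrite det_lblock map_scalar_mx /= -raddfB det_scalar.
  done.
have nY : ~~ root (char_poly Y) a.
  rewrite -eigenvalue_root_char; apply/negP => /eigenvalueP [w wY wn0].
  set z := row_mx (0 : 'rV_r) w.
  have QaB : Q - a%:M = block_mx 0 0 (dlsubmx Q) (Y - a%:M).
    rewrite {1}Qb (scalar_mx_block r m a) opp_block_mx add_block_mx.
    by congr block_mx; rewrite ?subrr ?oppr0 ?addr0.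
  have zQ : z *m (Q - a%:M) = row_mx (w *m dlsubmx Q) 0.
    rewrite QaB mul_row_block !mul0mx !add0r mulmxBr wY mul_mx_scalar.
    by rewrite subrr.
  have zQ2 : z *m (Q - a%:M) *m (Q - a%:M) = 0.
    rewrite zQ QaB mul_row_block !mulmx0 !mul0mx !addr0 row_mx0.
    done.
  have QP : (Q - a%:M) *m P = P *m (M - a%:M).
    rewrite mulmxBl mulmxBr /Q mulmxKV // scalar_mxC.
    done.
  set v := z *m P.
  have v2 : v *m (M - a%:M) *m (M - a%:M) = 0.
    by rewrite /v -(mulmxA z P) -QP mulmxA -(mulmxA _ P) -QP mulmxA zQ2 mul0mx.
  have v1 := gen v v2.
  have : (v <= U)%MS by rewrite UE; apply/sub_kermxP.
  rewrite -sUP => /submxP [u vu].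
  have : z *m P = row_mx u 0 *m P.
    by rewrite -/v vu -{2}(vsubmxK P) mul_row_col mul0mx addr0.
  move/(row_free_inj _)=> /= ez.
  have Pf : row_free P by rewrite row_free_unit.
  have := ez Pf; rewrite /z => /eq_row_mx [_ w0].
  by move: wn0; rewrite w0 eqxx.
rewrite cM mupM ?mup_XsubCX ?eqxx ?mupNroot ?addn0 //.
  by rewrite expf_neq0 // polyXsubC_eq0.
by rewrite monic_neq0 // char_poly_monic.
Qed.

Lemma mup_eigen n (M : 'M[F]_n) a :
  (forall v : 'rV_n, v *m (M - a%:M) *m (M - a%:M) = 0 -> v *m (M - a%:M) = 0) ->
  mup a (char_poly M) = \rank (eigenspace M a).
Proof.
move=> gen.
have le : (\rank (eigenspace M a) <= n)%N by apply: rank_leq_col.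
have H : forall r m N (e : (r + m)%N = N) (M : 'M[F]_N) (U : 'M_(r, N)),
  row_free U -> (U :=: eigenspace M a)%MS ->
  (forall v : 'rV_N, v *m (M - a%:M) *m (M - a%:M) = 0 -> v *m (M - a%:M) = 0) ->
  mup a (char_poly M) = r.
  move=> r m N e; case: N / e => M0 U0; exact: mup_core.
apply: (H _ _ _ (subnKC le) M (row_base (eigenspace M a))) => //.
  exact: row_base_free.
exact: eq_row_base.
Qed.

End Core.

Section Part.
Set Implicit Arguments. Unset Strict Implicit.
Variables (R : realFieldType) (n d : nat) (K : {set {set 'I_n}}) (eps : {set 'I_n} -> bool).
Hypothesis hK : simplicial_complex n K.

Local Notation T0 := (simp n K d).
Local Notation T1 := (simp n K d.+1).

Lemma facets_card (s : T1) : #|[set t : T0 | val t \subset val s]| = d.+2.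
Proof.
have sK : val s \in Sd n K d.+1 := valP s.
move: (sK); rewrite inE => /andP [sK' /eqP cs].
rewrite -(card_imset _ val_inj).
have -> : [set val x | x in [set t : T0 | val t \subset val s]] =
          [set A : {set 'I_n} | A \subset val s & #|A| == d.+1].
  apply/setP => A; rewrite inE; apply/imsetP/andP.
    case=> t; rewrite inE => ts ->; split => //.
    by have := valP t; rewrite inE => /andP [_].
  case=> As cA.
  have AS : A \in Sd n K d.
    rewrite inE cA andbT; apply: (proj2 hK _ _ sK' As).
    by apply/eqP => A0; move: cA; rewrite A0 cards0.
  by exists (exist _ A AS); rewrite // inE.
by rewrite cards_draws cs binSn.
Qed.


Lemma deg_card (t : T0) : deg n K d (val t) = #|[set s : T1 | val t \subset val s]|.
Proof.
rewrite /deg.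
suff -> : [set s in Sd n K d.+1 | val t \subset s] = val @: [set s : T1 | val t \subset val s].
  by rewrite card_imset //; exact: val_inj.
apply/setP => A; rewrite !inE; apply/andP/imsetP.
  case=> AS tA; have AS' : A \in Sd n K d.+1 by rewrite inE.
  by exists (exist _ A AS'); rewrite // inE.
case=> s; rewrite inE => ts ->; split => //.
by have := valP s; rewrite inE.
Qed.

Lemma card_T0 (t : T0) : #|val t| = d.+1.
Proof. by have := valP t; rewrite inE => /andP [_ /eqP]. Qed.

Lemma card_T1 (t : T1) : #|val t| = d.+2.
Proof. by have := valP t; rewrite inE => /andP [_ /eqP]. Qed.

Lemma union_facets (t t' : T0) (s : T1) : t != t' ->
  val t \subset val s -> val t' \subset val s -> val t :|: val t' = val s.
Proof.
move=> ntt ts t's; apply/eqP; rewrite eqEcard subUset ts t's /= card_T1.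
have : val t \proper val t :|: val t'.
  rewrite properEneq subsetUl andbT; apply/negP => /eqP e.
  have st : val t' \subset val t by rewrite e subsetUr.
  have : val t' == val t by rewrite eqEcard st !card_T0 leqnn.
  by move/eqP/val_inj => e'; move: ntt; rewrite e' eqxx.
by move/proper_card; rewrite card_T0.
Qed.

Lemma adj_sym : symmetric (adjG n K d).
Proof.
move=> x y; rewrite /adjG eq_sym; congr (_ && _).
by apply/existsP/existsP => -[s /andP [a b]]; exists s; rewrite a b.
Qed.

Lemma eq_sym_adj x y : adjG n K d x y -> adjG n K d y x.
Proof. by rewrite adj_sym. Qed.

Definition comp_of (t : T0) : {set T0} := [set y | connect (adjG n K d) t y].

Lemma comp_in t : t \in comp_of t.
Proof. by rewrite inE connect0. Qed.

Lemma compE C t : C \in components n K d -> t \in C -> C = comp_of t.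
Proof.
case/imsetP => x _ ->; rewrite inE => xt; apply/setP => y; rewrite !inE.
apply/idP/idP => [xy | ty]; last exact: connect_trans xt ty.
by apply: connect_trans xy; rewrite (sym_connect_sym adj_sym) in xt.
Qed.

Lemma comp_mem t : comp_of t \in components n K d.
Proof. by apply/imsetP; exists t. Qed.

Lemma comp_adj C x y : C \in components n K d -> x \in C -> adjG n K d x y -> y \in C.
Proof.
move=> hC xC xy; rewrite (compE hC xC) inE; exact: connect1.
Qed.


Definition sgS (t : T0) (S : {set 'I_n}) : R := (sgn n eps (val t) S)%:~R.

Lemma sgS2 t S : sgS t S * sgS t S = 1.
Proof.
rewrite /sgS /sgn -rmorphM /= -exprD addnn -mul2n exprM sqrrN !expr1n.
by [].
Qed.

Lemma sgnGE x y : (sgnG n K eps d x y)%:~R =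
  - (sgS x (val x :|: val y) * sgS y (val x :|: val y)) :> R.
Proof. by rewrite /sgnG rmorphN rmorphM. Qed.

Definition edge (u : T0 -> R) := forall x y, adjG n K d x y ->
  u y = - (sgnG n K eps d x y)%:~R * u x.
Definition good (u : T0 -> R) := forall (s : T1) (t t' : T0),
  val t \subset val s -> val t' \subset val s ->
  sgS t (val s) * u t = sgS t' (val s) * u t'.

Lemma good_edge u : good u -> edge u.
Proof.
move=> g x y /andP [nxy /existsP [s /andP [xs ys]]].
rewrite sgnGE (union_facets nxy xs ys) opprK.
have := g s x y xs ys => e.
by rewrite [sgS x _ * _]mulrC -mulrA e mulrA sgS2 mul1r.
Qed.

Lemma edge_good u : edge u -> good u.
Proof.
move=> e s t t' ts t's.
have [<-|ntt] := eqVneq t t'; first by [].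
have a : adjG n K d t t'.
  by rewrite /adjG ntt; apply/existsP; exists s; rewrite ts t's.
rewrite (e _ _ a) sgnGE (union_facets ntt ts t's) opprK.
rewrite -[LHS]mul1r -(sgS2 t' (val s)); ring.
Qed.


Lemma sum_enum (T : finType) (F : T -> R) :
  \sum_(i < #|{:T}|) F (enum_val i) = \sum_t F t.
Proof. by rewrite -(big_enum_val F). Qed.

Definition Bt (t : T0) (s : T1) : R := if val t \subset val s then sgS t (val s) else 0.

Local Notation B := (incid R n K eps d).
Local Notation D := (degmx R n K d).
Local Notation N0 := #|{:T0}|.
Definition lam : R := (d.+2)%:R.
Definition xf (x : 'rV[R]_N0) (t : T0) : R := x 0 (enum_rank t).

Lemma BE i j : B i j = Bt (enum_val i) (enum_val j).
Proof. by rewrite mxE. Qed.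

Lemma xfE (x : 'rV[R]_N0) i : x 0 i = xf x (enum_val i).
Proof. by rewrite /xf enum_valK. Qed.

Lemma AE (x : 'rV[R]_N0) k : (x *m (B *m B^T)) 0 k =
  \sum_s (\sum_t xf x t * Bt t s) * Bt (enum_val k) s.
Proof.
rewrite mulmxA mxE -[RHS]sum_enum; apply: eq_bigr => j _.
rewrite /incid -[X in _ = X * _]sum_enum !mxE; congr (_ * _); apply: eq_bigr => i _.
by rewrite !mxE xfE.
Qed.

Lemma DE (x : 'rV[R]_N0) k : (x *m D) 0 k = xf x (enum_val k) * (deg n K d (val (enum_val k)))%:R.
Proof. by rewrite mul_mx_diag !mxE xfE. Qed.


Lemma sum_if_const (T : finType) (P : pred T) (c : R) :
  \sum_t (if P t then c else 0) = #|P|%:R * c.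
Proof. by rewrite -big_mkcond sumr_const mulr_natl. Qed.

Lemma facets_card' (s : T1) : #|[pred t : T0 | val t \subset val s]| = d.+2.
Proof. by rewrite -(facets_card s); apply: eq_card => z; rewrite inE. Qed.

Lemma deg_card' (t : T0) : deg n K d (val t) = #|[pred s : T1 | val t \subset val s]|.
Proof. by rewrite deg_card; apply: eq_card => z; rewrite inE. Qed.

Lemma E1 (x : 'rV[R]_N0) : good (xf x) -> x *m (B *m B^T) = lam *: (x *m D).
Proof.
move=> g; apply/rowP => k; rewrite AE mxE DE; set t := enum_val k.
rewrite (eq_bigr (fun s : T1 => if val t \subset val s then lam * xf x t else 0)).
  rewrite sum_if_const -deg_card'; ring.
move=> s _; rewrite {2}/Bt; case: ifP => ts; last by rewrite mulr0.
rewrite (eq_bigr (fun t' : T0 => if val t' \subset val s then sgS t (val s) * xf x t else 0)).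
  rewrite sum_if_const facets_card' /lam.
  rewrite -[RHS]mul1r -(sgS2 t (val s)); ring.
move=> t' _; rewrite /Bt; case: ifP => t's; last by rewrite mulr0.
by rewrite mulrC (g s t' t t's ts).
Qed.


Lemma lagrange (T : finType) (P : pred T) (a : T -> R) :
  \sum_(t | P t) \sum_(t' | P t') (a t - a t') ^+ 2 =
  2%:R * (#|P|%:R * \sum_(t | P t) a t ^+ 2 - (\sum_(t | P t) a t) ^+ 2).
Proof.
set S := \sum_(t | P t) a t; set S2 := \sum_(t | P t) a t ^+ 2.
have e : forall t, \sum_(t' | P t') (a t - a t') ^+ 2 =
    #|P|%:R * a t ^+ 2 - 2%:R * a t * S + S2.
  move=> t.
  rewrite (eq_bigr (fun t' => a t ^+ 2 + (- (2%:R * a t * a t') + a t' ^+ 2))).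
    rewrite big_split big_split /= sumr_const sumrN -mulr_sumr -/S -/S2 -mulr_natl; ring.
  by move=> t' _; ring.
rewrite (eq_bigr _ (fun t _ => e t)) big_split big_split /= sumrN sumr_const.
rewrite -mulr_suml -mulr_sumr -/S -/S2 -mulr_sumr -/S2 mulr_natl; ring.
Qed.


Lemma E2 (x : 'rV[R]_N0) : x *m (B *m B^T) = lam *: (x *m D) -> good (xf x).
Proof.
move=> H.
set u := xf x.
set b := fun s : T1 => \sum_t u t * Bt t s.
set a := fun (s : T1) (t : T0) => Bt t s * u t.
have eq1 : forall t, \sum_s b s * Bt t s = lam * (u t * (deg n K d (val t))%:R).
  move=> t; have := congr1 (fun m : 'rV[R]_N0 => m 0 (enum_rank t)) H.
  by rewrite /= AE mxE DE enum_rankK.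
have Bt2 : forall t s, Bt t s ^+ 2 = if val t \subset val s then 1 else 0.
  by move=> t s; rewrite /Bt; case: ifP => _; rewrite ?expr0n // expr2 sgS2.
have tot : \sum_s b s ^+ 2 = lam * \sum_s \sum_t a s t ^+ 2.
  transitivity (\sum_t u t * (lam * (u t * (deg n K d (val t))%:R))).
    rewrite (eq_bigr (fun s : T1 => \sum_t u t * Bt t s * b s)); last first.
      by move=> s _; rewrite expr2 {1}/b mulr_suml.
    rewrite exchange_big /=; apply: eq_bigr => t _.
    by rewrite -eq1 mulr_sumr; apply: eq_bigr => s _; ring.
  rewrite exchange_big /= mulr_sumr; apply: eq_bigr => t _.
  rewrite (eq_bigr (fun s : T1 => u t ^+ 2 * (if val t \subset val s then 1 else 0))).
    by rewrite -mulr_sumr sum_if_const -deg_card'; ring.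
  by move=> s _; rewrite /a exprMn Bt2 mulrC.
have aP : forall (s : T1) (t : T0), ~~ (val t \subset val s) -> a s t = 0.
  by move=> s t nts; rewrite /a /Bt (negbTE nts) mul0r.
have Sa : forall s : T1, \sum_(t : T0 | val t \subset val s) a s t = b s.
  move=> s; rewrite big_mkcond /=; apply: eq_bigr => t _.
  by case: ifP => ts; rewrite /a /Bt ts ?mulr0 // mulrC.
have Sa2 : forall s : T1, \sum_(t : T0 | val t \subset val s) a s t ^+ 2 = \sum_t a s t ^+ 2.
  move=> s; rewrite big_mkcond /=; apply: eq_bigr => t _.
  by case: ifP => ts //; rewrite aP ?ts // expr0n.
set Q := fun s : T1 => \sum_(t : T0 | val t \subset val s) \sum_(t' : T0 | val t' \subset val s)
   (a s t - a s t') ^+ 2.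
have Q0 : \sum_s Q s = 0.
  rewrite (eq_bigr (fun s : T1 => 2%:R * (lam * \sum_t a s t ^+ 2 - b s ^+ 2))).
    rewrite -mulr_sumr sumrB -mulr_sumr tot subrr mulr0 //.
  move=> s _; rewrite /Q lagrange facets_card' Sa Sa2 //.
have Qge : forall s : T1, 0 <= Q s.
  move=> s; apply: sumr_ge0 => t _; apply: sumr_ge0 => t' _; exact: sqr_ge0.
move=> s t t' ts t's.
have Qs := psumr_eq0P (fun s _ => Qge s) Q0 (i:=s) isT.
have h1 := psumr_eq0P (fun t _ => sumr_ge0 _ (fun t' _ => sqr_ge0 _)) Qs (i:=t) ts.
have := psumr_eq0P (fun t' _ => sqr_ge0 _) h1 (i:=t') t's.
move/eqP; rewrite sqrf_eq0 subr_eq0 /a /Bt ts t's => /eqP.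
by rewrite [sgS t _ * _]mulrC [sgS t' _ * _]mulrC.
Qed.


Lemma diag_inv N (dv : 'rV[R]_N) : (forall i, 0 < dv 0 i) ->
  invmx (diag_mx dv) = diag_mx (\row_i (dv 0 i)^-1).
Proof.
move=> pos.
have DiD : diag_mx (\row_i (dv 0 i)^-1) *m diag_mx dv = 1%:M.
  apply/matrixP => i j; rewrite mul_diag_mx !mxE.
  case: eqP => [->|_]; rewrite ?mulr0 ?mulr1n ?mulVf //.
  by rewrite gt_eqF.
have [_ Du] := mulmx1_unit DiD.
by rewrite -[RHS]mulmx1 -(mulmxV Du) mulmxA DiD mul1mx.
Qed.

Lemma gen_cond N (A : 'M[R]_N) (dv : 'rV[R]_N) (l : R) : A^T = A ->
  (forall i, 0 < dv 0 i) ->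
  forall v : 'rV_N, v *m (invmx (diag_mx dv) *m A - l%:M) *m (invmx (diag_mx dv) *m A - l%:M) = 0 ->
  v *m (invmx (diag_mx dv) *m A - l%:M) = 0.
Proof.
move=> sA pos v.
rewrite diag_inv //.
set Di := diag_mx _.
set M := Di *m A - l%:M.
set L := A - l *: diag_mx dv.
have DiD : Di *m diag_mx dv = 1%:M.
  apply/matrixP => i j; rewrite mul_diag_mx !mxE.
  case: eqP => [->|_]; rewrite ?mulr0 ?mulr1n ?mulVf //.
  by rewrite gt_eqF.
have key : forall w : 'rV_N, w *m M = (w *m Di) *m L.
  move=> w; rewrite /M /L mulmxBr mulmxBr mulmxA mul_mx_scalar -scalemxAr.
  by rewrite -[w *m Di *m diag_mx dv]mulmxA DiD mulmx1.
have sL : L^T = L by rewrite /L linearB /= linearZ /= tr_diag_mx sA.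
set y := v *m M.
move=> h.
have yy : y *m Di *m y^T = 0.
  rewrite {2}/y key trmx_mul sL mulmxA -key h mul0mx //.
apply/rowP => i; rewrite [RHS]mxE.
have := congr1 (fun m : 'M[R]_1 => m 0 0) yy; rewrite /= !mxE.
rewrite (eq_bigr (fun j => y 0 j ^+ 2 / dv 0 j)); last first.
  move=> j _; rewrite mul_mx_diag !mxE; ring.
move=> H0.
have := psumr_eq0P (fun j _ => divr_ge0 (sqr_ge0 (y 0 j)) (ltW (pos j))) H0 (i:=i) isT.
move/eqP; rewrite mulf_eq0 invr_eq0 (gt_eqF (pos i)) orbF sqrf_eq0 => /eqP.
by move=> e; move: e; rewrite /y mxE.
Qed.


Definition sw (b : bool) : R := (-1) ^+ b.
Definition sG (x y : T0) : R := (sgnG n K eps d x y)%:~R.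

Lemma sw2 b : sw b * sw b = 1.
Proof. by rewrite /sw -exprD addnn -mul2n exprM sqrrN !expr1n. Qed.

Lemma sG2 (x y : T0) : sG x y * sG x y = 1.
Proof.
rewrite /sG sgnGE mulrNN.
by rewrite mulrACA sgS2 sgS2 mulr1.
Qed.

Definition ABpred (C : {set T0}) (f : {ffun T0 -> bool}) : bool :=
  [forall x, forall y, ((x \in C) && (y \in C) && adjG n K d x y) ==>
      ((-1) ^+ f x * sgnG n K eps d x y * (-1) ^+ f y == -1)].

Lemma abE (C : {set T0}) : antibalanced n K eps d C = [exists f, ABpred C f].
Proof. by []. Qed.

Definition fC (C : {set T0}) : {ffun T0 -> bool} :=
  odflt [ffun => false] [pick f | ABpred C f].

Lemma fCP (C : {set T0}) : antibalanced n K eps d C -> ABpred C (fC C).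
Proof.
rewrite abE /fC => /existsP [f0 Hf0].
by case: pickP => [f Hf | /(_ f0)]; rewrite ?Hf0.
Qed.

Lemma ABR (C : {set T0}) (f : {ffun T0 -> bool}) (x y : T0) : ABpred C f -> x \in C -> y \in C -> adjG n K d x y ->
  sw (f x) * sG x y * sw (f y) = -1.
Proof.
move=> /forallP /(_ x) /forallP /(_ y); rewrite -!andbA => h xC yC a.
move: h; rewrite xC yC a /= => /eqP /(congr1 (fun z : int => z%:~R : R)).
by rewrite !rmorphM /= !rmorphXn /= rmorphN1.
Qed.

Lemma RAB (C : {set T0}) (f : {ffun T0 -> bool}) : (forall x y, x \in C -> y \in C -> adjG n K d x y ->
  sw (f x) * sG x y * sw (f y) = -1) -> ABpred C f.
Proof.
move=> h; apply/forallP => x; apply/forallP => y; apply/implyP.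
rewrite -!andbA => /and3P [xC yC a]; apply/eqP; apply: (@intr_inj R).
by rewrite !rmorphM /= !rmorphXn /= rmorphN1; exact: h.
Qed.

Lemma swrel (a b s : R) : a * s * b = -1 -> a * a = 1 -> s * s = 1 -> b = - s * a.
Proof.
move=> H e1 e2.
transitivity (b * ((a * a) * (s * s))); first by rewrite e1 e2 !mulr1.
transitivity ((a * s * b) * (s * a)); first by ring.
by rewrite H mulN1r mulNr.
Qed.

Definition uC (C : {set T0}) (t : T0) : R := if t \in C then sw (fC C t) else 0.

Lemma uC_edge (C : {set T0}) : C \in components n K d -> antibalanced n K eps d C -> edge (uC C).
Proof.
move=> hC ab x y a; rewrite /uC.
have [xC|xC] := boolP (x \in C).
  have yC := comp_adj hC xC a; rewrite yC.
  apply: swrel; [exact: ABR (fCP ab) xC yC a | exact: sw2 | exact: sG2].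
have [yC|//] := boolP (y \in C); last by rewrite mulr0.
by move: xC; rewrite (comp_adj hC yC (eq_sym_adj a)).
Qed.


Lemma conn_inv (w : T0 -> R) (a : T0) :
  (forall x y, connect (adjG n K d) a x -> adjG n K d x y -> w y = w x) ->
  forall y, connect (adjG n K d) a y -> w y = w a.
Proof.
move=> H y /connectP [p pp ->].
suff: forall x, connect (adjG n K d) a x -> path (adjG n K d) x p -> w (last x p) = w x.
  by move/(_ a (connect0 _ a) pp).
elim: p {pp} => [|z p IH] x cx //= /andP [xz pz].
rewrite IH ?(H x z cx xz) //; exact: connect_trans cx (connect1 xz).
Qed.

Lemma edge_uniq u (C : {set T0}) : edge u -> C \in components n K d ->
  antibalanced n K eps d C -> forall t t0, t \in C -> t0 \in C ->
  u t * sw (fC C t) = u t0 * sw (fC C t0).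
Proof.
move=> e hC ab t t0 tC t0C.
have CE := compE hC t0C.
apply: (conn_inv (w := fun z => u z * sw (fC C z))); last by rewrite CE inE in tC.
move=> x y cx a.
have xC : x \in C by rewrite CE inE.
have yC := comp_adj hC xC a.
rewrite (e _ _ a) (swrel (ABR (fCP ab) xC yC a) (sw2 _) (sG2 _ _)).
transitivity (u x * sw (fC C x) * (sG x y * sG x y)); first by ring.
by rewrite sG2 mulr1.
Qed.

Lemma edge_sq u (C : {set T0}) : edge u -> C \in components n K d ->
  forall t t0, t \in C -> t0 \in C -> u t ^+ 2 = u t0 ^+ 2.
Proof.
move=> e hC t t0 tC t0C.
have CE := compE hC t0C.
apply: (conn_inv (w := fun z => u z ^+ 2)); last by rewrite CE inE in tC.
move=> x y cx a; rewrite (e _ _ a).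
transitivity (u x ^+ 2 * (sG x y * sG x y)); first by rewrite /sG; ring.
by rewrite sG2 mulr1.
Qed.

Lemma edge_zero u (C : {set T0}) : edge u -> C \in components n K d ->
  ~~ antibalanced n K eps d C -> forall t, t \in C -> u t = 0.
Proof.
move=> e hC nab t tC; apply/eqP/negPn/negP => ut0.
move/negP: nab; apply; rewrite abE; apply/existsP.
exists [ffun z => u z != u t]; apply: RAB => x y xC yC a.
have rel : forall z, z \in C -> u z = sw ([ffun z => u z != u t] z) * u t.
  move=> z zC; rewrite ffunE /sw.
  have := edge_sq e hC zC tC => /eqP; rewrite eqf_sqr => /orP [/eqP ->|/eqP ->].
    by rewrite eqxx mul1r.
  case: eqP => [h|_]; last by rewrite expr1 mulN1r.
  have h0 : u t = 0 by lra.
  by rewrite h0 eqxx in ut0.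
set g := [ffun z => u z != u t] in rel *.
have ey := e _ _ a.
rewrite (rel x xC) (rel y yC) mulrA in ey.
have ey' := mulIf ut0 ey.
rewrite ey'.
transitivity (- (sw (g x) * sw (g x)) * (sG x y * sG x y)); first by ring.
by rewrite sw2 sG2 mulr1.
Qed.


Hypothesis hdeg : forall t, t \in Sd n K d -> (0 < deg n K d t)%N.

Definition AB := [set C in components n K d | antibalanced n K eps d C].
Definition X : 'M[R]_(#|AB|, N0) := \matrix_(c, i) uC (enum_val c) (enum_val i).
Local Notation M := (upLap R n K eps d).

Lemma edge_ext u u' : u =1 u' -> edge u -> edge u'.
Proof. by move=> e h x y a; rewrite -!e; exact: h. Qed.

Lemma dv_pos : forall i, 0 < (\row_i (deg n K d (val (enum_val i : T0)))%:R : 'rV[R]_N0) 0 i.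
Proof. by move=> i; rewrite mxE ltr0n; apply: hdeg; exact: valP. Qed.

Lemma D_unit : D \in unitmx.
Proof.
have h : D *m diag_mx (\row_i ((\row_i (deg n K d (val (enum_val i : T0)))%:R : 'rV[R]_N0) 0 i)^-1) = 1%:M.
  apply/matrixP => i j; rewrite /degmx mul_diag_mx !mxE.
  case: eqP => [->|_]; rewrite ?mulr0 ?mulr1n //.
  have := dv_pos j; rewrite mxE => p; rewrite mulfV //; exact: lt0r_neq0.
by case: (mulmx1_unit h).
Qed.

Lemma M_eq : M = invmx D *m (B *m B^T).
Proof. by rewrite /upLap mulmxA. Qed.

Lemma eigE (v : 'rV[R]_N0) : v *m M = lam *: v ->
  (v *m invmx D) *m (B *m B^T) = lam *: ((v *m invmx D) *m D).
Proof.
by move=> h; rewrite -mulmxA -M_eq h -mulmxA (mulVmx D_unit) mulmx1.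
Qed.

Lemma eigE' (x : 'rV[R]_N0) : x *m (B *m B^T) = lam *: (x *m D) ->
  (x *m D) *m M = lam *: (x *m D).
Proof.
by move=> h; rewrite M_eq mulmxA -(mulmxA x D) (mulmxV D_unit) mulmx1 h.
Qed.


Lemma ABin (c : 'I_#|AB|) : enum_val c \in components n K d /\ antibalanced n K eps d (enum_val c).
Proof. by have := enum_valP c; rewrite inE => /andP. Qed.

Lemma X_row (c : 'I_#|AB|) : xf (row c X) =1 uC (enum_val c).
Proof. by move=> t; rewrite /xf !mxE enum_rankK. Qed.

Lemma W_sub : (X *m D <= eigenspace M lam)%MS.
Proof.
apply/row_subP => c; rewrite row_mul; apply/eigenspaceP; apply: eigE'; apply: E1.
apply: edge_good; apply: (edge_ext (u := uC (enum_val c))) => [t|]; first by rewrite X_row.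
by case: (ABin c) => h1 h2; exact: uC_edge.
Qed.

Lemma uC_out (C : {set T0}) (t : T0) : t \notin C -> uC C t = 0.
Proof. by rewrite /uC => /negbTE ->. Qed.

Lemma sub_W : (eigenspace M lam <= X *m D)%MS.
Proof.
apply/row_subP => i; set v := row i (eigenspace M lam).
have ve : v *m M = lam *: v by apply/eigenspaceP; exact: row_sub.
set x := v *m invmx D.
have e := good_edge (E2 (eigE ve)).
have vx : v = x *m D by rewrite /x -mulmxA (mulVmx D_unit) mulmx1.
rewrite vx; apply: submxMr; apply/submxP.
exists (\row_(c < #|AB|) (if [pick z in (enum_val c : {set T0})] is Some z then xf x z * sw (fC (enum_val c) z) else 0)).
apply/rowP => k; rewrite xfE mxE; set t := enum_val k.
have [abt|nabt] := boolP (antibalanced n K eps d (comp_of t)).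
  have C0in : comp_of t \in AB by rewrite inE comp_mem abt.
  set c0 := enum_rank_in C0in (comp_of t).
  have ec0 : enum_val c0 = comp_of t by rewrite /c0 enum_rankK_in.
  rewrite (bigD1 c0) //= big1 ?addr0; last first.
    move=> c nc; rewrite !mxE -/t uC_out ?mulr0 //; apply/negP => tc.
    case: (ABin c) => h1 _.
    have := compE h1 tc => ec; move: nc.
    have -> : c = c0 by apply: enum_val_inj; rewrite ec0 ec.
    by rewrite eqxx.
  rewrite !mxE -/t ec0; case: pickP => [z zC|none]; last by have := none t; rewrite comp_in.
  rewrite /uC comp_in -(edge_uniq e (comp_mem t) abt (comp_in t) zC).
  by rewrite -mulrA sw2 mulr1.
rewrite big1.
  exact: (edge_zero e (comp_mem t) nabt (comp_in t)).
move=> c _; rewrite !mxE -/t uC_out ?mulr0 //; apply/negP => tc.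
case: (ABin c) => h1 h2.
by move: nabt; rewrite -(compE h1 tc) h2.
Qed.

Lemma X_free : row_free X.
Proof.
rewrite -kermx_eq0 -submx0; apply/row_subP => i; set a := row i (kermx X).
have aX : a *m X = 0 by apply/sub_kermxP; exact: row_sub.
suff -> : a = 0 by rewrite sub0mx.
apply/rowP => c; rewrite mxE.
case: (ABin c) => h1 _.
case/imsetP: (h1) => t0 _ Ce.
have t0C : t0 \in enum_val c by rewrite Ce inE connect0.
have := congr1 (fun m : 'rV[R]_N0 => m 0 (enum_rank t0)) aX.
rewrite /= !mxE (bigD1 c) //= big1 ?addr0; last first.
  move=> c' nc; rewrite !mxE enum_rankK uC_out ?mulr0 //; apply/negP => tc.
  case: (ABin c') => h1' _.
  have e1 := compE h1' tc; have e2 := compE h1 t0C.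
  by move: nc; rewrite (enum_val_inj (etrans e1 (esym e2))) eqxx.
rewrite !mxE enum_rankK /uC t0C => /eqP; rewrite mulf_eq0 => /orP [/eqP //|].
move=> /eqP h; have := sw2 (fC (enum_val c) t0); rewrite h mul0r => /eqP.
by rewrite eq_sym oner_eq0.
Qed.

Lemma rank_eig : \rank (eigenspace M lam) = #|AB|.
Proof.
have eq : (X *m D == eigenspace M lam)%MS by rewrite W_sub sub_W.
rewrite -(eqmx_rank eq) mxrankMfree ?row_free_unit ?D_unit //.
by apply/eqP; exact: X_free.
Qed.

Lemma gen_M : forall v : 'rV[R]_N0, v *m (M - lam%:M) *m (M - lam%:M) = 0 ->
  v *m (M - lam%:M) = 0.
Proof.
rewrite M_eq /degmx; apply: gen_cond; last exact: dv_pos.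
by rewrite trmx_mul trmxK.
Qed.

End Part.


Theorem mainTheorem3 (R : realFieldType) (n d : nat) (K : {set {set 'I_n}})
    (eps : {set 'I_n} -> bool) :
  simplicial_complex n K ->
  (forall t, t \in Sd n K d -> (0 < deg n K d t)%N) ->
  (eigenvalue (upLap R n K eps d) (d.+2)%:R <->
     exists2 C, C \in components n K d & antibalanced n K eps d C) /\
  mup (d.+2)%:R (char_poly (upLap R n K eps d)) = n_antibalanced n K eps d.
Proof.
move=> hK hdeg.
have rk := rank_eig R eps hK hdeg.
have mp : mup (d.+2)%:R (char_poly (upLap R n K eps d)) = n_antibalanced n K eps d.
  rewrite (mup_eigen (@gen_M R n d K eps hdeg)).
  exact: rk.
split => //.
rewrite /eigenvalue -mxrank_eq0.
have -> : \rank (eigenspace (upLap R n K eps d) (d.+2)%:R) = #|AB d K eps| by exact: rk.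
split.
  by rewrite -lt0n card_gt0 => /set0Pn [C]; rewrite inE => /andP [h1 h2]; exists C.
case=> C h1 h2; rewrite -lt0n card_gt0; apply/set0Pn; exists C.
by rewrite inE h1 h2.
Qed.
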